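(* Let $M=\begin{bmatrix} e & f\\ g & h\end{bmatrix}\in SL_2(\mathbb C)$, let $\mu=\operatorname{tr}M$ with $\mu^2\neq 4$, let $n\ge1$ be an integer, and put $X=S_{n-1}^2(\mu)$ and $Y=S_{n-1}(\mu)S_{n-2}(\mu)$. Then $$\sum_{i=0}^{n-1}(\mathrm{Ad}_M)^i=\frac{1}{\mu^2-4}\begin{bmatrix} C_{11}&C_{12}&C_{13}\\ C_{21}&C_{22}&C_{23}\\ C_{31}&C_{32}&C_{33}\end{bmatrix},$$ where $C_{11}=2nfg+h^2(2X-\mu Y)-2h(\mu X-2Y)+(\mu^2-2)X-\mu Y$, $C_{12}=2f\big(n(e-h)+h(2X-\mu Y)-\mu X+2Y\big)$, $C_{13}=f^2(2n-2X+\mu Y)$, $C_{21}=-g\big(n(h-e)-h(2X-\mu Y)+\mu X-2Y\big)$, $C_{22}=n(e-h)^2+2fg(2X-\mu Y)$, $C_{23}=f\big(n(e-h)+h(2X-\mu Y)-\mu X+(\mu^2-2)Y\big)$, $C_{31}=g^2(2n-2X+\mu Y)$, $C_{32}=-2g\big(n(h-e)-h(2X-\mu Y)+\mu X-(\mu^2-2)Y\big)$, $C_{33}=2nfg+h^2(2X-\mu Y)-2h\big(\mu X-(\mu^2-2)Y\big)+(\mu^2-2)X-(\mu^3-3\mu)Y$.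
   Context: $S_k(v)$ are the Chebyshev polynomials of the second kind: $S_0(v)=1$, $S_1(v)=v$, $S_k(v)=vS_{k-1}(v)-S_{k-2}(v)$ for all integers $k$ (so $S_{-1}=0$). For $P\in SL_2(\mathbb C)$, $\mathrm{Ad}_P$ is the linear map $g\mapsto PgP^{-1}$ on $sl_2(\mathbb C)$, written as a $3\times3$ matrix with respect to the ordered basis $E=\begin{bmatrix}0&1\\0&0\end{bmatrix}$, $H=\begin{bmatrix}1&0\\0&-1\end{bmatrix}$, $F=\begin{bmatrix}0&0\\1&0\end{bmatrix}$, the $j$-th column being the coordinates of the image of the $j$-th basis vector. *)

(* Defs.v *)
From HB Require Import structures.
From mathcomp Require Import all_boot all_order all_algebra.
From mathcomp Require Import complex.
From mathcomp Require Import reals.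
Set Implicit Arguments. Unset Strict Implicit. Unset Printing Implicit Defensive.
Import Order.TTheory GRing.Theory Num.Theory.
Local Open Scope ring_scope.

Fixpoint chebS_nat {K : nzRingType} (k : nat) (v : K) : K :=
  match k with
  | 0%N => 1
  | k'.+1 =>
      match k' with
      | 0%N => v
      | k''.+1 => v * chebS_nat k' v - chebS_nat k'' v
      end
  end.

(* Extension to all integer indices via S_k = v S_{k-1} - S_{k-2}:
   S_{-1} = 0 and S_{-m} = - S_{m-2} for m >= 2. *)
Definition chebS {K : nzRingType} (k : int) (v : K) : K :=
  match k with
  | Posz m => chebS_nat m v
  | Negz 0 => 0
  | Negz m.+1 => - chebS_nat m v
  end.

Definition sl2E {K : nzRingType} : 'M[K]_2 := \matrix_(i < 2, j < 2)
  (if (i == 0 :> nat) && (j == 1 :> nat) then 1 else 0).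
Definition sl2H {K : nzRingType} : 'M[K]_2 := \matrix_(i < 2, j < 2)
  (if (i == j) then (if i == 0 :> nat then 1 else -1) else 0).
Definition sl2F {K : nzRingType} : 'M[K]_2 := \matrix_(i < 2, j < 2)
  (if (i == 1 :> nat) && (j == 0 :> nat) then 1 else 0).

Definition sl2basis {K : nzRingType} (j : 'I_3) : 'M[K]_2 :=
  match val j with 0%N => sl2E | 1%N => sl2H | _ => sl2F end.

(* Coordinates of a traceless 2x2 matrix [[a, b], [c, -a]] = b E + a H + c F *)
Definition sl2coord {K : nzRingType} (A : 'M[K]_2) (i : 'I_3) : K :=
  match val i with 0%N => A 0 1 | 1%N => A 0 0 | _ => A 1 0 end.

Definition AdMx {K : comUnitRingType} (P : 'M[K]_2) : 'M[K]_3 :=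
  \matrix_(i < 3, j < 3) sl2coord (P *m sl2basis j *m invmx P) i.

Definition mx3 {K : nzRingType} (a11 a12 a13 a21 a22 a23 a31 a32 a33 : K)
  : 'M[K]_3 :=
  \matrix_(i < 3, j < 3)
    nth 0 (nth [::] [:: [:: a11; a12; a13]; [:: a21; a22; a23];
                        [:: a31; a32; a33]] i) j.

(* Main.v *)
Require Import Defs.
From HB Require Import structures.
From mathcomp Require Import all_boot all_order all_algebra.
From mathcomp Require Import complex.
From mathcomp Require Import reals.
From mathcomp Require Import ring.
Import Order.TTheory GRing.Theory Num.Theory.
Local Open Scope ring_scope.

Lemma ord2P (i : 'I_2) : i = 0 \/ i = 1.
Proof. case: i => [[|[|//]] H]; [left|right]; exact: val_inj. Qed.
Lemma ord3P (i : 'I_3) : [\/ i = 0, i = 1 | i = 2%:R].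
Proof. case: i => [[|[|[|//]]] H]; [apply: Or31|apply: Or32|apply: Or33]; exact: val_inj. Qed.

Lemma det22 (K : comNzRingType) (M : 'M[K]_2) : \det M = M 0 0 * M 1 1 - M 0 1 * M 1 0.
Proof.
rewrite (expand_det_row _ 0) !big_ord_recr big_ord0 /= /cofactor !det_mx11 !mxE /=.
have E0 : widen_ord (leqnSn 1) ord_max = 0 :> 'I_2 by apply: val_inj.
have E1 : lift 0 0 = 1 :> 'I_2 by apply: val_inj.
have E2 : lift 1 0 = 0 :> 'I_2 by apply: val_inj.
have E3 : ord_max = 1 :> 'I_2 by apply: val_inj.
rewrite E0 E1 E3 E2 /= expr0 expr1; ring.
Qed.
Lemma mul22 (K : comNzRingType) (A B : 'M[K]_2) i j : (A *m B) i j = A i 0 * B 0 j + A i 1 * B 1 j.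
Proof.
rewrite mxE !big_ord_recr big_ord0 /= add0r.
have E0 : widen_ord (leqnSn 1) ord_max = 0 :> 'I_2 by apply: val_inj.
have E3 : ord_max = 1 :> 'I_2 by apply: val_inj.
by rewrite E0 E3.
Qed.
Lemma mul33 (K : comNzRingType) (A B : 'M[K]_3) i j :
  (A *m B) i j = A i 0 * B 0 j + A i 1 * B 1 j + A i 2%:R * B 2%:R j.
Proof.
rewrite mxE !big_ord_recl big_ord0 /= addr0 addrA.
have E1 : lift 0 0 = 1 :> 'I_3 by apply: val_inj.
have E2 : lift 0 (lift 0 (0 : 'I_1)) = 2%:R :> 'I_3 by apply: val_inj.
by rewrite E1 E2.
Qed.
Lemma tr22 (K : comNzRingType) (M : 'M[K]_2) : \tr M = M 0 0 + M 1 1.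
Proof.
rewrite /mxtrace !big_ord_recr big_ord0 /= add0r.
have E0 : widen_ord (leqnSn 1) ord_max = 0 :> 'I_2 by apply: val_inj.
have E3 : ord_max = 1 :> 'I_2 by apply: val_inj.
by rewrite E0 E3.
Qed.

Definition inv22 {K : nzRingType} (M : 'M[K]_2) : 'M[K]_2 :=
  \matrix_(i < 2, j < 2) if i == 0 then (if j == 0 then M 1 1 else - M 0 1)
                         else (if j == 0 then - M 1 0 else M 0 0).

Lemma invmx22 (K : comUnitRingType) (M : 'M[K]_2) : \det M = 1 -> invmx M = inv22 M.
Proof.
move=> hd.
have U : M \in unitmx by rewrite unitmxE hd unitr1.
have hM : M *m inv22 M = 1%:M.
  apply/matrixP => i j; rewrite mul22 !mxE.
  have := hd; rewrite det22 => hd'.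
  by case: (ord2P i) => ->; case: (ord2P j) => -> /=; rewrite ?mulr1n ?mulr0n; (try rewrite -hd'); ring.
by rewrite -[invmx M]mulmx1 -hM mulmxA mulVmx // mul1mx.
Qed.

Definition Amx {K : nzRingType} (e f g h : K) : 'M[K]_3 :=
  mx3 (e^+2) (-(2*e*f)) (-(f^+2)) (-(e*g)) (e*h+f*g) (f*h) (-(g^+2)) (2*g*h) (h^+2).

Lemma AdMxE (K : comUnitRingType) (M : 'M[K]_2) : \det M = 1 ->
  AdMx M = Amx (M 0 0) (M 0 1) (M 1 0) (M 1 1).
Proof.
move=> hd; apply/matrixP => i j; rewrite !mxE invmx22 //.
by case: (ord3P i) => ->; case: (ord3P j) => -> /=; rewrite /sl2coord /= !mul22 !mxE /=; ring.
Qed.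

Definition Cm {K : nzRingType} (e f g h nn X Y : K) : 'M[K]_3 :=
  let mu := e + h in
  mx3
    (2 * nn * f * g + h ^+ 2 * (2 * X - mu * Y) - 2 * h * (mu * X - 2 * Y)
       + (mu ^+ 2 - 2) * X - mu * Y)
    (2 * f * (nn * (e - h) + h * (2 * X - mu * Y) - mu * X + 2 * Y))
    (f ^+ 2 * (2 * nn - 2 * X + mu * Y))
    (- g * (nn * (h - e) - h * (2 * X - mu * Y) + mu * X - 2 * Y))
    (nn * (e - h) ^+ 2 + 2 * f * g * (2 * X - mu * Y))
    (f * (nn * (e - h) + h * (2 * X - mu * Y) - mu * X + (mu ^+ 2 - 2) * Y))
    (g ^+ 2 * (2 * nn - 2 * X + mu * Y))
    (- 2 * g * (nn * (h - e) - h * (2 * X - mu * Y) + mu * X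
                - (mu ^+ 2 - 2) * Y))
    (2 * nn * f * g + h ^+ 2 * (2 * X - mu * Y)
       - 2 * h * (mu * X - (mu ^+ 2 - 2) * Y)
       + (mu ^+ 2 - 2) * X - (mu ^+ 3 - 3 * mu) * Y).

Lemma step (K : fieldType) (e f g h nn X Y : K) : e * h - f * g = 1 ->
  ((e + h) ^+ 2 - 4)%:M + Amx e f g h *m Cm e f g h nn X Y
  = Cm e f g h (nn + 1) (((e + h) ^+ 2 - 1) * X - (e + h) * Y + 1) ((e + h) * X - Y).
Proof.
move=> hd; apply/matrixP => i j; rewrite mxE mul33 !mxE.
have [e0|e0] := eqVneq e 0.
  have f0 : f != 0 by apply/eqP => f0; move: hd; rewrite e0 f0 !mul0r subrr => /eqP; rewrite eq_sym oner_eq0.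
  have -> : g = - f^-1 by rewrite e0 mul0r sub0r in hd; apply: (mulfI f0); rewrite mulrN mulfV // -hd opprK.
  rewrite e0.
  by case: (ord3P i) => ->; case: (ord3P j) => -> /=; rewrite ?mulr1n ?mulr0n; field.
have -> : h = (1 + f * g) / e by rewrite -hd subrK mulrC mulKf.
by case: (ord3P i) => ->; case: (ord3P j) => -> /=; rewrite ?mulr1n ?mulr0n; field.
Qed.

Lemma base (K : fieldType) (e f g h : K) : e * h - f * g = 1 ->
  Cm e f g h 1 1 0 = ((e + h) ^+ 2 - 4)%:M.
Proof.
move=> hd; apply/matrixP => i j; rewrite !mxE.
have [e0|e0] := eqVneq e 0.
  have f0 : f != 0 by apply/eqP => f0; move: hd; rewrite e0 f0 !mul0r subrr => /eqP; rewrite eq_sym oner_eq0.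
  have -> : g = - f^-1 by rewrite e0 mul0r sub0r in hd; apply: (mulfI f0); rewrite mulrN mulfV // -hd opprK.
  rewrite e0.
  by case: (ord3P i) => ->; case: (ord3P j) => -> /=; rewrite ?mulr1n ?mulr0n; field.
have -> : h = (1 + f * g) / e by rewrite -hd subrK mulrC mulKf.
by case: (ord3P i) => ->; case: (ord3P j) => -> /=; rewrite ?mulr1n ?mulr0n; field.
Qed.

Lemma cheb_prev (K : nzRingType) (k : nat) (v : K) : chebS (k.+1%:Z - 1) v = chebS_nat k v.
Proof. by rewrite -addn1 PoszD addrK. Qed.

Lemma cheb_rec (K : nzRingType) (k : nat) (v : K) :
  chebS_nat k.+1 v = v * chebS_nat k v - chebS (k%:Z - 1) v.
Proof.
case: k => [|k]; first by rewrite /= mulr1 subr0.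
by rewrite cheb_prev.
Qed.

Lemma cassini (K : comNzRingType) (k : nat) (v : K) :
  chebS_nat k v ^+ 2 - v * (chebS_nat k v * chebS (k%:Z - 1) v) + chebS (k%:Z - 1) v ^+ 2 = 1.
Proof.
elim: k => [|k IH].
  have -> : chebS (0%:Z - 1) v = 0 by [].
  rewrite /=; ring.
rewrite cheb_prev cheb_rec -IH; ring.
Qed.

Lemma sum_main (K : fieldType) (M : 'M[K]_2) (k : nat) : \det M = 1 ->
  let e := M 0 0 in let f := M 0 1 in let g := M 1 0 in let h := M 1 1 in
  let mu := e + h in mu ^+ 2 != 4 ->
  \sum_(i < k.+1) (AdMx M) ^+ i = (mu ^+ 2 - 4)^-1 *: Cm e f g h (k.+1)%:R
     (chebS_nat k mu ^+ 2) (chebS_nat k mu * chebS (k%:Z - 1) mu).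
Proof.
move=> hd e f g h mu hmu.
have hd' : e * h - f * g = 1 by rewrite -hd det22.
have c0 : mu ^+ 2 - 4 != 0 by rewrite subr_eq0.
rewrite AdMxE //.
elim: k => [|k IH].
  rewrite big_ord1 expr0 /=.
  rewrite expr1n mulr0 base // scale_scalar_mx mulVf //.
rewrite big_ord_recl expr0.
under eq_bigr => i _ do rewrite /= exprS.
rewrite -mulr_sumr IH -mulmxE.
set a := chebS_nat k mu; set b := chebS (k%:Z - 1) mu.
have hc : a ^+ 2 - mu * (a * b) + b ^+ 2 = 1 by exact: cassini.
have -> : chebS_nat k.+1 mu = mu * a - b by rewrite cheb_rec.
rewrite cheb_prev.
have -> : (mu * a - b) ^+ 2 = (mu ^+ 2 - 1) * a ^+ 2 - mu * (a * b) + 1.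
  have E : (mu * a - b) ^+ 2 = (mu ^+ 2 - 1) * a ^+ 2 - mu * (a * b) + (a ^+ 2 - mu * (a * b) + b ^+ 2) by ring.
  by rewrite E hc.
have -> : (mu * a - b) * a = mu * a ^+ 2 - a * b by ring.
rewrite (_ : (k.+2)%:R = (k.+1)%:R + 1 :> K); last by rewrite natr1.
rewrite -(step _ _ _ _ _ (k.+1)%:R _ _ hd') scalerDr scale_scalar_mx mulVf //.
by rewrite scalemxAr.
Qed.

Theorem proposition3p1 (R : realType) (M : 'M[R[i]]_2) (n : nat) :
  \det M = 1 ->
  let e := M 0 0 in let f := M 0 1 in let g := M 1 0 in let h := M 1 1 in
  let mu := \tr M in
  mu ^+ 2 != 4 ->
  (1 <= n)%N ->
  let X := chebS (n%:Z - 1) mu ^+ 2 in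
  let Y := chebS (n%:Z - 1) mu * chebS (n%:Z - 2) mu in
  let nn : R[i] := n%:R in
  \sum_(i < n) (AdMx M) ^+ i =
  (mu ^+ 2 - 4)^-1 *: mx3
    (2 * nn * f * g + h ^+ 2 * (2 * X - mu * Y) - 2 * h * (mu * X - 2 * Y)
       + (mu ^+ 2 - 2) * X - mu * Y)
    (2 * f * (nn * (e - h) + h * (2 * X - mu * Y) - mu * X + 2 * Y))
    (f ^+ 2 * (2 * nn - 2 * X + mu * Y))
    (- g * (nn * (h - e) - h * (2 * X - mu * Y) + mu * X - 2 * Y))
    (nn * (e - h) ^+ 2 + 2 * f * g * (2 * X - mu * Y))
    (f * (nn * (e - h) + h * (2 * X - mu * Y) - mu * X + (mu ^+ 2 - 2) * Y))
    (g ^+ 2 * (2 * nn - 2 * X + mu * Y))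
    (- 2 * g * (nn * (h - e) - h * (2 * X - mu * Y) + mu * X
                - (mu ^+ 2 - 2) * Y))
    (2 * nn * f * g + h ^+ 2 * (2 * X - mu * Y)
       - 2 * h * (mu * X - (mu ^+ 2 - 2) * Y)
       + (mu ^+ 2 - 2) * X - (mu ^+ 3 - 3 * mu) * Y).
Proof.
move=> hd e f g h mu hmu; case: n => [//|k] _ X Y nn.
have E2 : (k.+1%:Z - 2 = k%:Z - 1 :> int)%R by rewrite -addn1 PoszD -addrA; congr (_ + _).
rewrite /X /Y /nn /mu /e /f /g /h cheb_prev E2 !tr22.
rewrite /mu tr22 in hmu.
exact: (sum_main _ _ k hd hmu).
Qed.
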